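(* Let $R$ be an $h$-local domain with field of fractions $Q$, let $\Lambda$ be an $R$-algebra, and let $M$ be a finitely generated right $\Lambda$-module which is torsion-free as an $R$-module. For each maximal ideal $\mathfrak m$ of $R$ let $X(\mathfrak m)$ be a $\Lambda_\mathfrak m$-submodule of $M_\mathfrak m$, torsion-free as an $R_\mathfrak m$-module, with $X(\mathfrak m)\otimes Q=M_\mathfrak m\otimes Q$. The following are equivalent: (i) there is a $\Lambda$-submodule $N\subseteq M$, torsion-free as an $R$-module, with $N_\mathfrak m=X(\mathfrak m)$ for all maximal ideals $\mathfrak m$ of $R$; (ii) $X(\mathfrak m)=M_\mathfrak m$ for all but finitely many maximal ideals $\mathfrak m$ of $R$. Moreover, if each $X(\mathfrak m)$ is finitely generated as a $\Lambda_\mathfrak m$-module, then such an $N$ is finitely generated as a $\Lambda$-module.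
   Context: A commutative domain is $h$-local if every non-zero element lies in only finitely many maximal ideals and every non-zero prime ideal is contained in a unique maximal ideal. A module is torsion-free over $R$ if $M\to M\otimes_R Q$ is injective; submodules of $M$ and $M_\mathfrak m$ are viewed inside $M\otimes_R Q$. *)

(* Defs.v *)
From HB Require Import structures.
From mathcomp Require Import all_boot all_order all_algebra fraction.
From mathcomp Require Import boolp classical_sets cardinality.
Set Implicit Arguments. Unset Strict Implicit. Unset Printing Implicit Defensive.
Import GRing.Theory.
Local Open Scope ring_scope.
Local Open Scope classical_set_scope.

Section Ideals.
Variable R : comNzRingType.

Definition is_ideal (I : set R) : Prop :=
  I 0 /\ (forall x y, I x -> I y -> I (x + y)) /\ (forall r x, I x -> I (r * x)).

Definition maximal_ideal (I : set R) : Prop :=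
  is_ideal I /\ ~ I 1 /\
  (forall J : set R, is_ideal J -> I `<=` J -> J = I \/ J 1).

Definition prime_ideal (P : set R) : Prop :=
  is_ideal P /\ ~ P 1 /\ (forall a b, P (a * b) -> P a \/ P b).

Definition h_local : Prop :=
  (forall a : R, a != 0 -> finite_set [set m : set R | maximal_ideal m /\ m a]) /\
  (forall P : set R, prime_ideal P -> P <> [set 0] ->
     exists m, [/\ maximal_ideal m, P `<=` m &
                  forall m', maximal_ideal m' -> P `<=` m' -> m' = m]).
End Ideals.

(* ---------- Modules inside the ambient Q-vector space V = M (x)_R Q ---------- *)
Section Modules.
Variables (R : idomainType) (L : algType R) (V : lmodType {fraction R}).
Variable act : V -> L -> V.

Local Notation "x %:F" := (@tofrac R x).

(* V is a right L-module, Q-linear in V, compatible with the R-algebra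
   structure of L (the action of L (x) Q on M (x) Q, restricted to L). *)
Definition is_right_action : Prop :=
  (forall v, act v 1 = v) /\
  [/\ (forall v a b, act v (a * b) = act (act v a) b),
      (forall u v a, act (u + v) a = act u a + act v a),
      (forall v a b, act v (a + b) = act v a + act v b),
      (forall (k : {fraction R}) v a, act (k *: v) a = k *: act v a) &
      (forall (r : R) v a, act v (r *: a) = r%:F *: act v a)].

Definition is_Lsubmod (N : set V) : Prop :=
  [/\ N 0, (forall x y, N x -> N y -> N (x + y)),
      (forall (r : R) x, N x -> N (r%:F *: x)) &
      (forall x a, N x -> N (act x a))].

(* right L_m-submodule of V, L_m = L (x)_R R_m, m a maximal ideal *)
Definition is_loc_Lsubmod (m : set R) (X : set V) : Prop :=
  [/\ X 0, (forall x y, X x -> X y -> X (x + y)),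
      (forall (r s : R) x, ~ m s -> X x -> X ((r%:F / s%:F) *: x)) &
      (forall x a, X x -> X (act x a))].

Definition localize (m : set R) (S : set V) : set V :=
  [set v | exists x s, [/\ S x, ~ m s & v = (s%:F)^-1 *: x]].

(* image of S (x)_R Q in V: the Q-span of S *)
Definition tensorQ (S : set V) : set V :=
  [set v | exists n (k : 'I_n -> {fraction R}) (x : 'I_n -> V),
            (forall i, S (x i)) /\ v = \sum_(i < n) k i *: x i].

Definition fg_Lmod (N : set V) : Prop :=
  exists n (g : 'I_n -> V), (forall i, N (g i)) /\
    N = [set v | exists l : 'I_n -> L, v = \sum_(i < n) act (g i) (l i)].

(* finitely generated as a right L_m-module (elements of L_m are a / s) *)
Definition fg_loc_Lmod (m : set R) (X : set V) : Prop :=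
  exists n (g : 'I_n -> V), (forall i, X (g i)) /\
    X = [set v | exists (l : 'I_n -> L) (s : 'I_n -> R), (forall i, ~ m (s i)) /\
                  v = \sum_(i < n) ((s i)%:F)^-1 *: act (g i) (l i)].
End Modules.

(* Main.v *)
Require Import Defs.
From HB Require Import structures.
From mathcomp Require Import all_boot all_order all_algebra fraction generic_quotient.
From mathcomp Require Import boolp classical_sets cardinality.
From mathcomp Require Import ring finmap.
Set Implicit Arguments. Unset Strict Implicit. Unset Printing Implicit Defensive.
Import GRing.Theory.
Local Open Scope ring_scope.
Local Open Scope classical_set_scope.
Local Open Scope quotient_scope.

Section Ring.
Variable R : idomainType.

Lemma ideal0 (I : set R) : is_ideal I -> I 0.
Proof. by case. Qed.
Lemma idealD (I : set R) x y : is_ideal I -> I x -> I y -> I (x + y).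
Proof. by case=> _ [h _]; apply: h. Qed.
Lemma idealM (I : set R) r x : is_ideal I -> I x -> I (r * x).
Proof. by case=> _ [_ h]; apply: h. Qed.
Lemma idealMr (I : set R) r x : is_ideal I -> I x -> I (x * r).
Proof. by move=> II Ix; rewrite mulrC; apply: idealM. Qed.

Lemma max_ideal (m : set R) : maximal_ideal m -> is_ideal m.
Proof. by case. Qed.
Lemma max_1 (m : set R) : maximal_ideal m -> ~ m 1.
Proof. by case=> _ []. Qed.

Lemma max_prime (m : set R) a b : maximal_ideal m -> m (a * b) -> m a \/ m b.
Proof.
case=> [Im [n1 mx]] ab; have [ma|na] := EM (m a); [by left|right].
pose J := [set x | exists y c, m y /\ x = y + c * a].
have IJ : is_ideal J.
  split; first by exists 0, 0; split; [exact: ideal0|ring].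
  split.
    move=> x y [y1 [c1 [h1 ->]]] [y2 [c2 [h2 ->]]].
    by exists (y1 + y2), (c1 + c2); split; [exact: idealD|ring].
  move=> r x [y1 [c1 [h1 ->]]]; exists (r * y1), (r * c1).
  by split; [exact: idealM|ring].
have mJ : m `<=` J by move=> x mx'; exists x, 0; split => //; ring.
case: (mx J IJ mJ) => [Jm|[y [c [my e]]]].
  by exfalso; apply: na; rewrite -Jm; exists 0, 1; split; [exact: ideal0|ring].
have -> : b = b * y + c * (a * b) by rewrite -[b in LHS]mulr1 e; ring.
by apply: idealD => //; [exact: idealM|exact: idealM].
Qed.

Lemma max_notM (m : set R) a b : maximal_ideal m -> ~ m a -> ~ m b -> ~ m (a * b).
Proof. by move=> Mm na nb /(max_prime Mm) []. Qed.

Lemma max_neq0 (m : set R) a : maximal_ideal m -> ~ m a -> a != 0.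
Proof. by move=> /max_ideal Im na; apply/eqP => a0; apply: na; rewrite a0; exact: ideal0. Qed.

Lemma zorn_ideal (I S : set R) : is_ideal I -> (forall x, I x -> ~ S x) ->
  exists P, [/\ is_ideal P, I `<=` P, (forall x, P x -> ~ S x) &
     forall J, is_ideal J -> P `<=` J -> (forall x, J x -> ~ S x) -> J = P].
Proof.
move=> II IS.
pose good (X : set R) := [/\ is_ideal X, I `<=` X & forall x, X x -> ~ S x].
pose Pr (X : set R) := X = set0 \/ good X.
have goodI : good I by split.
have [F FP Ftot|A [PA Amax]] := @Zorn_bigcup R Pr.
  have gX : forall X x, F X -> X x -> good X.
    move=> X x FX Xx; case: (FP X FX) => // X0; by rewrite X0 in Xx.
  have [[X0 [x0 [FX0 X0x0]]]|none] := EM (exists X x, F X /\ X x).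
    right; have gX0 := gX _ _ FX0 X0x0; split.
    - split; first by exists X0 => //; case: gX0 => [[]].
      split.
        move=> x y [X1 FX1 X1x] [X2 FX2 X2y].
        case: (Ftot _ _ FX1 FX2) => [s12|s21].
          exists X2 => //; apply: idealD => //; [by case: (gX _ _ FX2 X2y)|exact: s12].
        exists X1 => //; apply: idealD => //; [by case: (gX _ _ FX1 X1x)|exact: s21].
      move=> r x [X1 FX1 X1x]; exists X1 => //; apply: idealM => //.
      by case: (gX _ _ FX1 X1x).
    - by move=> x Ix; exists X0 => //; case: gX0 => _ + _; apply.
    - by move=> x [X1 FX1 X1x]; case: (gX _ _ FX1 X1x) => _ _; apply.
  left; apply/seteqP; split => // x [X FX Xx]; exfalso; apply: none.
  by exists X, x.
have gA : good A.
  case: PA => // A0; exfalso; apply: (Amax I); last by right.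
  rewrite A0; split; first by move=> x [].
  by move=> /(_ 0 (ideal0 II)).
case: (gA) => IA IsA AS.
exists A; split => // J IJ AJ JS.
have [//|nJA] := EM (J = A).
exfalso; apply: (Amax J); last by right; split => //; apply: subset_trans AJ.
split => // JA; apply: nJA; apply/seteqP; split => //.
Qed.

Lemma exists_max (I : set R) : is_ideal I -> ~ I 1 ->
  exists m, maximal_ideal m /\ I `<=` m.
Proof.
move=> II nI1.
have [P [IP IsP PS Pmax]] := @zorn_ideal I [set 1] II (fun x Ix x1 => nI1 (eq_ind x I Ix 1 x1)).
exists P; split => //; split => //; split; first by move=> /PS; apply.
move=> J IJ PJ; have [J1|nJ1] := EM (J 1); [by right|left].
by apply: Pmax => // x Jx x1; apply: nJ1; rewrite -x1.
Qed.

Lemma exists_max0 : exists m : set R, maximal_ideal m.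
Proof.
have I0 : is_ideal [set (0 : R)].
  split => //; split; first by move=> x y /= -> ->; rewrite addr0.
  by move=> r x /= ->; rewrite mulr0.
have [|m [Mm _]] := exists_max I0; last by exists m.
by move=> /= /eqP; rewrite oner_eq0.
Qed.

Lemma zorn_prime (I S : set R) : is_ideal I -> (forall x, I x -> ~ S x) ->
  S 1 -> (forall a b, S a -> S b -> S (a * b)) ->
  exists P, [/\ prime_ideal P, I `<=` P & forall x, P x -> ~ S x].
Proof.
move=> II IS S1 SM.
have [P [IP IsP PS Pmax]] := zorn_ideal II IS.
exists P; split => //; split => //; split; first by move=> /PS; apply.
move=> a b Pab; apply: contrapT => /not_orP [na nb].
have ext : forall z, ~ P z -> exists y c, P y /\ S (y + c * z).
  move=> z nz.
  pose J := [set x | exists y c, P y /\ x = y + c * z].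
  have IJ : is_ideal J.
    split; first by exists 0, 0; split; [exact: ideal0|ring].
    split.
      move=> x y [y1 [c1 [h1 ->]]] [y2 [c2 [h2 ->]]].
      by exists (y1 + y2), (c1 + c2); split; [exact: idealD|ring].
    move=> r' x [y1 [c1 [h1 ->]]]; exists (r' * y1), (r' * c1).
    by split; [exact: idealM|ring].
  have PJ : P `<=` J by move=> x Px; exists x, 0; split => //; ring.
  apply: contrapT => nn.
  have JP : J = P.
    apply: (Pmax J IJ PJ) => x [y [c [Py ->]]] Sx; apply: nn; by exists y, c.
  by apply: nz; rewrite -JP; exists 0, 1; split; [exact: ideal0|ring].
have [y1 [c1 [Py1 S1']]] := ext a na.
have [y2 [c2 [Py2 S2']]] := ext b nb.
apply: (PS _ _ (SM _ _ S1' S2')).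
have -> : (y1 + c1 * a) * (y2 + c2 * b) =
   y1 * (y2 + c2 * b) + (c1 * a * y2 + c1 * c2 * (a * b)) by ring.
apply: idealD => //; first by apply: idealMr.
by apply: idealD => //; apply: idealM.
Qed.

Lemma hlocal_sep (r : R) (m m' : set R) : h_local R -> r != 0 ->
  maximal_ideal m -> maximal_ideal m' -> m <> m' ->
  exists u b c, [/\ ~ m u, ~ m' b & u * b = r * c].
Proof.
move=> [_ hP] r0 Mm Mm' mm'.
apply: contrapT => none.
pose S := [set x | exists u b, [/\ ~ m u, ~ m' b & x = u * b]].
pose I := [set x | exists c, x = r * c].
have II : is_ideal I.
  split; first by exists 0; rewrite mulr0.
  split; first by move=> x y [c1 ->] [c2 ->]; exists (c1 + c2); ring.
  by move=> a x [c ->]; exists (a * c); ring.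
have IS : forall x, I x -> ~ S x.
  move=> x [c ->] [u [b [nu nb e]]]; apply: none; exists u, b, c; split; [done|done|by rewrite e].
have S1 : S 1 by exists 1, 1; split; rewrite ?mulr1 //; exact: max_1.
have SM : forall a b, S a -> S b -> S (a * b).
  move=> a b [u1 [b1 [h1 h2 ->]]] [u2 [b2 [h3 h4 ->]]].
  exists (u1 * u2), (b1 * b2); split; [exact: max_notM|exact: max_notM|ring].
have [P [pP IP PS]] := zorn_prime II IS S1 SM.
have Pm : P `<=` m.
  move=> x Px; apply: contrapT => nx; apply: (PS x Px); exists x, 1; split => //.
  - exact: max_1.
  - by rewrite mulr1.
have Pm' : P `<=` m'.
  move=> x Px; apply: contrapT => nx; apply: (PS x Px); exists 1, x; split => //.
  - exact: max_1.
  - by rewrite mul1r.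
have P0 : P <> [set 0].
  move=> P0; have : P r by apply: IP; exists 1; rewrite mulr1.
  by rewrite P0 /= => /eqP; rewrite (negbTE r0).
have [m0 [_ _ uniq]] := hP P pP P0.
by apply: mm'; rewrite (uniq m Mm Pm) (uniq m' Mm' Pm').
Qed.

End Ring.

Section Frac.
Variable R : idomainType.
Local Notation "x %:F" := (@tofrac R x).

Lemma frac_repr (x : {fraction R}) : exists a b : R, b != 0 /\ x = a%:F / b%:F.
Proof.
elim/quotW: x => y.
exists (frac y).1, (frac y).2; split; first exact: denom_ratioP.
apply: (@mulIf _ ((frac y).2)%:F); first by rewrite tofrac_eq0 denom_ratioP.
rewrite mulfVK ?tofrac_eq0 ?denom_ratioP //.
rewrite /tofrac; unlock.
change (FracField.mul (\pi_({fraction R}) y) (\pi_({fraction R}) (Ratio (frac y).2 1)) = \pi_({fraction R}) (Ratio (frac y).1 1)).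
rewrite -FracField.pi_mul.
apply/eqmodP; rewrite /= FracField.equivfE /FracField.mulf.
rewrite !numden_Ratio ?mulf_neq0 ?oner_neq0 ?denom_ratioP //.
by rewrite !mulr1 mulrC.
Qed.

Lemma fin_prod (G : set (set R)) (f : set R -> R) (Q : R -> Prop) :
  finite_set G -> Q 1 -> (forall a b, Q a -> Q b -> Q (a * b)) ->
  (forall m, G m -> Q (f m)) ->
  exists p, Q p /\ forall m, G m -> exists q, p = f m * q.
Proof.
move=> fG Q1 QM Qf; exists (\prod_(m <- fset_set G) f m); split.
  rewrite big_seq; apply: (big_ind Q) => // m.
  by rewrite in_fset_set // => /set_mem /Qf.
move=> m Gm; have mG : m \in fset_set G by rewrite in_fset_set //; apply: mem_set.
by rewrite (big_rem m mG) /=; eexists.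
Qed.
End Frac.

Section Mod.
Variables (R : idomainType) (L : algType R) (V : lmodType {fraction R}).
Variable act : V -> L -> V.
Hypothesis HA : is_right_action act.
Local Notation "x %:F" := (@tofrac R x).

Lemma act1 v : act v 1 = v. Proof. by case: HA. Qed.
Lemma actM v a b : act v (a * b) = act (act v a) b. Proof. by case: HA => _ []. Qed.
Lemma actDl u v a : act (u + v) a = act u a + act v a. Proof. by case: HA => _ []. Qed.
Lemma actDr v a b : act v (a + b) = act v a + act v b. Proof. by case: HA => _ []. Qed.
Lemma actZl k v a : act (k *: v) a = k *: act v a. Proof. by case: HA => _ []. Qed.
Lemma actZr (r : R) v a : act v (r *: a) = r%:F *: act v a. Proof. by case: HA => _ []. Qed.
Lemma act0l a : act 0 a = 0.
Proof. by have := actZl 0 0 a; rewrite !scale0r. Qed.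
Lemma act0r v : act v 0 = 0.
Proof. by have := actZr 0 v 0; rewrite scale0r tofrac0 scale0r. Qed.
Lemma act_suml n (f : 'I_n -> V) a : act (\sum_i f i) a = \sum_i act (f i) a.
Proof. by elim/big_rec2: _ => [|i y1 y2 _ <-]; [exact: act0l|exact: actDl]. Qed.

Definition Gen n (g : 'I_n -> V) : set V :=
  [set v | exists l : 'I_n -> L, v = \sum_(i < n) act (g i) (l i)].

Lemma sub_sum (Y : set V) n (f : 'I_n -> V) : is_Lsubmod act Y ->
  (forall i, Y (f i)) -> Y (\sum_i f i).
Proof. by case=> Y0 YD _ _ Yf; apply: (big_ind Y) => //. Qed.

Lemma Gen_sub n (g : 'I_n -> V) : is_Lsubmod act (Gen g).
Proof.
split.
- by exists (fun _ => 0); rewrite big1 // => i _; rewrite act0r.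
- move=> x y [l1 ->] [l2 ->]; exists (fun i => l1 i + l2 i).
  by rewrite -big_split /=; apply: eq_bigr => i _; rewrite actDr.
- move=> r x [l ->]; exists (fun i => r *: l i).
  by rewrite scaler_sumr; apply: eq_bigr => i _; rewrite actZr.
- move=> x a [l ->]; exists (fun i => l i * a).
  by rewrite act_suml; apply: eq_bigr => i _; rewrite actM.
Qed.

Lemma Gen_min (Y : set V) n (g : 'I_n -> V) : is_Lsubmod act Y ->
  (forall i, Y (g i)) -> Gen g `<=` Y.
Proof.
move=> HY Yg x [l ->]; apply: sub_sum => // i.
by case: HY => _ _ _ Ya; apply: Ya.
Qed.

Lemma Gen_gen n (g : 'I_n -> V) i : Gen g (g i).
Proof.
exists (fun j => if j == i then 1 else 0).
rewrite (bigD1 i) //= eqxx act1 big1 ?addr0 // => j /negbTE ->.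
by rewrite act0r.
Qed.

Lemma scale_gen (Y M : set V) n (g : 'I_n -> V) (r : R) :
  is_Lsubmod act Y -> M = Gen g -> (forall i, Y (r%:F *: g i)) ->
  forall x, M x -> Y (r%:F *: x).
Proof.
move=> HY -> Yg x [l ->]; rewrite scaler_sumr; apply: sub_sum => // i.
by rewrite -actZl; case: HY => _ _ _ Ya; apply: Ya.
Qed.

Lemma subZ (Y : set V) (r : R) x : is_Lsubmod act Y -> Y x -> Y (r%:F *: x).
Proof. by case=> _ _ h _; apply: h. Qed.

Lemma clear_denom (Y : set V) (Q : R -> Prop) :
  is_Lsubmod act Y -> Q 1 -> (forall a b, Q a -> Q b -> Q (a * b)) ->
  (forall b, Q b -> b != 0) ->
  forall n (k : 'I_n -> {fraction R}) (w : 'I_n -> V),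
  (forall i, Y (w i)) -> (forall i, exists a b, Q b /\ k i = a%:F / b%:F) ->
  exists D, Q D /\ Y (D%:F *: \sum_i k i *: w i).
Proof.
move=> HY Q1 QM Q0; elim=> [|n IH] k w Yw Hk.
  by exists 1; split => //; rewrite big_ord0 scaler0; case: HY.
have [D [QD YD]] := IH (fun i => k (widen_ord (leqnSn n) i))
                        (fun i => w (widen_ord (leqnSn n) i)) (fun i => Yw _) (fun i => Hk _).
rewrite big_ord_recr /=.
have [a [b [Qb ->]]] := Hk ord_max.
exists (D * b); split; first exact: QM.
rewrite scalerDr.
have b0 : b%:F != 0 by rewrite tofrac_eq0; exact: Q0.
have -> : (D * b)%:F *: (a%:F / b%:F *: w ord_max) = (D * a)%:F *: w ord_max.
  by rewrite scalerA; congr (_ *: _); rewrite !tofracM [a%:F / _]mulrC mulrA mulfK.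
case: (HY) => Y0 YDD YZ Ya.
have h1 : Y ((D * b)%:F *: \sum_(i < n) k (widen_ord (leqnSn n) i) *: w (widen_ord (leqnSn n) i)).
  by rewrite tofracM mulrC -scalerA; exact: YZ.
exact: (YDD _ _ h1 (YZ _ _ (Yw ord_max))).
Qed.

Lemma tensorQ_mono (S T : set V) : S `<=` T -> tensorQ S `<=` tensorQ T.
Proof. by move=> ST v [n [k [x [Sx ->]]]]; exists n, k, x; split => // i; apply: ST. Qed.

Lemma loc_self (m : set R) (S : set V) : maximal_ideal m -> S `<=` localize m S.
Proof.
move=> Mm x Sx; exists x, 1; split => //; first exact: max_1.
by rewrite tofrac1 invr1 scale1r.
Qed.

Lemma loc_sub (m : set R) (Y : set V) : maximal_ideal m ->
  is_loc_Lsubmod act m Y -> is_Lsubmod act Y.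
Proof.
move=> Mm [Y0 YD YZ Ya]; split => // r x Yx.
have := YZ r 1 x (max_1 Mm) Yx; by rewrite tofrac1 divr1.
Qed.

Lemma locZinv (m : set R) (Y : set V) s x : is_loc_Lsubmod act m Y ->
  ~ m s -> Y x -> Y ((s%:F)^-1 *: x).
Proof.
move=> [_ _ YZ _] ns Yx; have := YZ 1 s x ns Yx; by rewrite tofrac1 div1r.
Qed.

Lemma dense_gen (Y : set V) : is_Lsubmod act Y -> tensorQ Y = [set: V] ->
  forall v, exists d : R, d != 0 /\ Y (d%:F *: v).
Proof.
move=> HY HT v; have : tensorQ Y v by rewrite HT.
move=> [n [k [x [Yx ->]]]].
have [D [D0 YD]] := @clear_denom Y (fun b => b != 0) HY (oner_neq0 _)
   (fun a b => @mulf_neq0 _ a b) (fun b h => h) n k x Yx (fun i => frac_repr (k i)).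
by exists D.
Qed.

Lemma rM (Y M : set V) n (g : 'I_n -> V) : is_Lsubmod act Y -> M = Gen g ->
  (forall v, exists d : R, d != 0 /\ Y (d%:F *: v)) ->
  exists r : R, r != 0 /\ forall x, M x -> Y (r%:F *: x).
Proof.
move=> HY HM Hd.
have [D HD] := choice (fun i : 'I_n => Hd (g i)).
exists (\prod_i D i); split.
  by rewrite prodf_seq_neq0; apply/allP => i _; case: (HD i).
apply: (scale_gen HY HM) => i.
rewrite (bigD1 i) //= mulrC tofracM -scalerA; apply: subZ => //.
by case: (HD i).
Qed.

End Mod.
Section Main.
Variables (R : idomainType) (L : algType R) (V : lmodType {fraction R}).
Variables (act : V -> L -> V) (M : set V) (X : set R -> set V).
Hypotheses (hl : h_local R) (HA : is_right_action act) (HMs : is_Lsubmod act M)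
  (HMT : tensorQ M = [set: V])
  (HX : forall m, maximal_ideal m ->
     [/\ is_loc_Lsubmod act m (X m), X m `<=` localize m M &
         tensorQ (X m) = tensorQ (localize m M)]).
Variables (n : nat) (g : 'I_n -> V).
Hypotheses (Mg : forall i, M (g i)) (HMgen : M = Gen act g).
Local Notation "x %:F" := (@tofrac R x).

Lemma X_sub m : maximal_ideal m -> is_Lsubmod act (X m).
Proof. by move=> Mm; apply: (loc_sub Mm); case: (HX Mm). Qed.

Lemma X_dense m : maximal_ideal m ->
  forall v, exists d : R, d != 0 /\ X m (d%:F *: v).
Proof.
move=> Mm v; have HT : tensorQ (X m) = [set: V]; last exact: (dense_gen (X_sub Mm) HT v).
case: (HX Mm) => _ _ ->; apply/seteqP; split => // w _.
by apply: (tensorQ_mono (loc_self Mm)); rewrite HMT.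
Qed.

Lemma N_dense (N : set V) : is_Lsubmod act N ->
  (forall m, maximal_ideal m -> localize m N = X m) ->
  exists r : R, r != 0 /\ forall x, M x -> N (r%:F *: x).
Proof.
move=> HN HNX; have [m0 Mm0] := exists_max0 R.
apply: (rM HA HN HMgen) => v.
have [d [d0 Xd]] := X_dense Mm0 v.
move: Xd; rewrite -HNX // => -[y [s [Ny ns e]]].
exists (s * d); split; first by rewrite mulf_neq0 // (max_neq0 Mm0 ns).
rewrite tofracM -scalerA e scalerA mulfV ?scale1r // tofrac_eq0.
exact: (max_neq0 Mm0 ns).
Qed.

Lemma partA : (exists N : set V, [/\ is_Lsubmod act N, N `<=` M &
        forall m, maximal_ideal m -> localize m N = X m]) ->
   finite_set [set m : set R | maximal_ideal m /\ X m <> localize m M].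
Proof.
move=> [N [HN NM HNX]]; have [r [r0 hr]] := N_dense HN HNX.
apply: sub_finite_set (hl.1 r r0) => m [Mm ne]; split => //.
apply: contrapT => nr; apply: ne; rewrite -HNX //; apply/seteqP; split.
  move=> _ [x [s [Nx ns ->]]]; exists x, s; split => //; exact: NM.
move=> _ [x [s [Mx ns ->]]]; exists (r%:F *: x), (r * s); split.
- exact: hr.
- exact: max_notM.
- by rewrite scalerA tofracM invfM mulrAC mulVf ?mul1r // tofrac_eq0.
Qed.

Lemma partB : finite_set [set m : set R | maximal_ideal m /\ X m <> localize m M] ->
  (exists N : set V, [/\ is_Lsubmod act N, N `<=` M &
        forall m, maximal_ideal m -> localize m N = X m]).
Proof.
move=> fF.
have Hd : forall m, exists d : R, maximal_ideal m ->
    d != 0 /\ forall x, M x -> X m (d%:F *: x).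
  move=> m; have [Mm|nM] := EM (maximal_ideal m); last by exists 1.
  have [r [r0 hr]] := rM HA (X_sub Mm) HMgen (X_dense Mm); by exists r.
have [d Hd'] := choice Hd.
have [r [r0 hr]] := @fin_prod R _ d (fun a => a != 0) fF (oner_neq0 _)
   (fun a b => @mulf_neq0 _ a b) (fun m mF => (Hd' m mF.1).1).
have rX : forall m, maximal_ideal m -> forall x, M x -> X m (r%:F *: x).
  move=> m Mm x Mx; have [e|e] := EM (X m = localize m M).
    by rewrite e; exact: (loc_self Mm (subZ _ HMs Mx)).
  have [q ->] := hr m (conj Mm e).
  rewrite tofracM mulrC -scalerA; exact: (subZ _ (X_sub Mm) ((Hd' m Mm).2 x Mx)).
pose N := [set x | M x /\ forall m, maximal_ideal m -> X m x].
exists N; split.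
- split.
  + by split; [case: HMs| move=> m Mm; case: (X_sub Mm)].
  + move=> x y [Mx Xx] [My Xy]; split; first by case: HMs => _ + _ _; apply.
    by move=> m Mm; case: (X_sub Mm) => _ + _ _; apply; [apply: Xx|apply: Xy].
  + move=> a x [Mx Xx]; split; first exact: (subZ _ HMs Mx).
    by move=> m Mm; exact: (subZ _ (X_sub Mm) (Xx m Mm)).
  + move=> x a [Mx Xx]; split; first by case: HMs => _ _ _; apply.
    by move=> m Mm; case: (X_sub Mm) => _ _ _; apply; apply: Xx.
- by move=> x [].
move=> m Mm; apply/seteqP; split.
  move=> _ [x [s [[Mx Nx] ns ->]]]; case: (HX Mm) => HXm _ _.
  exact: (locZinv HXm ns (Nx m Mm)).
move=> y Xy; case: (HX Mm) => _ XM _.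
have [x [s [Mx ns ey]]] := XM y Xy.
pose G := [set m' | maximal_ideal m' /\ m' r /\ m' <> m].
have fG : finite_set G.
  by apply: sub_finite_set (hl.1 r r0) => m' [Mm' [mr _]].
have Hu : forall m', exists u : R, maximal_ideal m' /\ m' <> m ->
    exists b c, [/\ ~ m u, ~ m' b & u * b = r * c].
  move=> m'; have [[Mm' ne]|nn] := EM (maximal_ideal m' /\ m' <> m); last by exists 1.
  have [u [b [c h]]] := hlocal_sep hl r0 Mm Mm' (nesym ne).
  by exists u => _; exists b, c.
have [u Hu'] := choice Hu.
have [U [nU hU]] := @fin_prod R G u (fun a => ~ m a) fG (max_1 Mm)
   (fun a b => @max_notM R m a b Mm)
   (fun m' h => let: conj Mm' (conj _ ne) := h in
                let: ex_intro b (ex_intro c (And3 nu _ _)) := Hu' m' (conj Mm' ne) in nu).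
have s0 : s%:F != 0 by rewrite tofrac_eq0; exact: (max_neq0 Mm ns).
have U0 : U%:F != 0 by rewrite tofrac_eq0; exact: (max_neq0 Mm nU).
exists (U%:F *: x), (s * U); split.
- split; first exact: (subZ _ HMs Mx).
  move=> m' Mm'; have [->|ne] := EM (m' = m).
    have -> : U%:F *: x = (U * s)%:F *: y.
      by rewrite ey scalerA tofracM -mulrA mulfV ?mulr1.
    exact: (subZ _ (X_sub Mm) Xy).
  case: (HX Mm') => HXm' _ _.
  have [mr|mr] := EM (m' r).
    have [q eU] := hU m' (conj Mm' (conj mr ne)).
    have [b [c [nu nb e]]] := Hu' m' (conj Mm' ne).
    have b0 : b%:F != 0 by rewrite tofrac_eq0; exact: (max_neq0 Mm' nb).
    have -> : U%:F *: x = (b%:F)^-1 *: (r%:F *: ((c * q)%:F *: x)).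
      rewrite !scalerA; congr (_ *: _); rewrite eU.
      apply: (mulfI b0); rewrite mulrA mulfV // mul1r -!tofracM; congr tofrac.
      have -> : b * (u m' * q) = (u m' * b) * q by ring.
      by rewrite e; ring.
    apply: (locZinv HXm' nb); apply: rX => //; exact: (subZ _ HMs Mx).
  have r0F : r%:F != 0 by rewrite tofrac_eq0.
  have -> : U%:F *: x = (r%:F)^-1 *: (r%:F *: (U%:F *: x)).
    by rewrite scalerK.
  apply: (locZinv HXm' mr); apply: rX => //; exact: (subZ _ HMs Mx).
- exact: max_notM.
- by rewrite ey scalerA tofracM invfM -mulrA mulVf ?mulr1.
Qed.

Lemma partC : (forall m, maximal_ideal m -> fg_loc_Lmod act m (X m)) ->
   forall N : set V, is_Lsubmod act N -> N `<=` M ->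
     (forall m, maximal_ideal m -> localize m N = X m) ->
     fg_Lmod act N.
Proof.
move=> Hfg N HN NM HNX.
have [r [r0 hr]] := N_dense HN HNX.
have Hys : forall m, exists ys : seq V, maximal_ideal m ->
   (forall y, y \in ys -> N y) /\
   forall Y, is_Lsubmod act Y -> (forall y, y \in ys -> Y y) ->
     forall x, N x -> exists D, ~ m D /\ Y (D%:F *: x).
  move=> m; have [Mm|nM] := EM (maximal_ideal m); last by exists [::].
  have [k [h [Xh Xdef]]] := Hfg m Mm.
  have Hyt : forall i, exists yt : V * R,
      [/\ N yt.1, ~ m yt.2 & h i = (yt.2%:F)^-1 *: yt.1].
    by move=> i; have := Xh i; rewrite -HNX // => -[y [t [Ny nt e]]]; exists (y, t).
  have [yt Hyt'] := choice Hyt.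
  exists [seq (yt i).1 | i <- enum 'I_k] => _; split.
    by move=> y /mapP [i _ ->]; case: (Hyt' i).
  move=> Y HY Yys x Nx.
  have : X m x by rewrite -HNX //; apply: loc_self.
  rewrite Xdef => -[l [s [ns ->]]].
  have Yw : forall i, Y (act (yt i).1 (l i)).
    move=> i; case: HY => _ _ _; apply; apply: Yys.
    by apply/mapP; exists i; rewrite ?mem_enum.
  have [D [nD YD]] := @clear_denom R L V act Y (fun a => ~ m a) HY (max_1 Mm)
     (fun a b => @max_notM R m a b Mm) (fun b => @max_neq0 R m b Mm) k
     (fun i => 1%:F / (s i * (yt i).2)%:F) _ Yw
     (fun i => ex_intro _ 1 (ex_intro _ (s i * (yt i).2)
        (conj (max_notM Mm (ns i) (let: And3 _ h _ := Hyt' i in h)) erefl))).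
  exists D; split => //; move: YD; congr (Y (_ *: _)).
  apply: eq_bigr => i _; case: (Hyt' i) => _ _ ->.
  rewrite (actZl HA).
  have E : forall (a b : R) (w : V), (a%:F)^-1 *: ((b%:F)^-1 *: w) = (1%:F / (a * b)%:F) *: w.
    by move=> a b w; rewrite scalerA tofrac1 div1r tofracM invfM.
  exact: (esym (E _ _ _)).
have [ys Hys'] := choice Hys.
pose G := [set m | maximal_ideal m /\ m r].
have fG : finite_set G := hl.1 r r0.
pose s := [seq r%:F *: g i | i <- enum 'I_n] ++ flatten [seq ys m | m <- fset_set G].
have sG : forall m y, m \in fset_set G -> y \in ys m -> y \in s.
  move=> m y mG yy; rewrite mem_cat; apply/orP; right.
  by apply/flatten_mapP; exists m.
have sN : forall y, y \in s -> N y.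
  move=> y; rewrite mem_cat => /orP [/mapP [i _ ->]|/flatten_mapP [m mG yy]].
    exact: hr.
  move: mG; rewrite in_fset_set // => /set_mem mG.
  exact: (Hys' m mG.1).1.
exists (size s), (fun i => nth 0 s i); split.
  by move=> i; apply: sN; apply: mem_nth.
apply/seteqP; split; last first.
  by apply: (Gen_min HN) => i; apply: sN; apply: mem_nth.
move=> x Nx.
pose Y := Gen act (fun i : 'I_(size s) => nth 0 s i).
have HY : is_Lsubmod act Y := Gen_sub HA _.
have Ys : forall y, y \in s -> Y y.
  move=> y ys'; have := Gen_gen HA (fun i : 'I_(size s) => nth 0 s i) (Ordinal (etrans (index_mem y s) ys')).
  by rewrite /= nth_index.
pose J := [set a : R | Y (a%:F *: x)].
have IJ : is_ideal J.
  split; first by rewrite /J /= tofrac0 scale0r; case: HY.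
  split.
    by move=> a b Ja Jb; rewrite /J /= tofracD scalerDl; case: HY => _ + _ _; apply.
  by move=> a b Jb; rewrite /J /= tofracM -scalerA; exact: (subZ _ HY Jb).
have Jr : J r.
  apply: (scale_gen HA HY HMgen) => [i|]; last exact: NM.
  by apply: Ys; rewrite mem_cat; apply/orP; left; apply/mapP; exists i; rewrite ?mem_enum.
have J1 : J 1.
  apply: contrapT => nJ1; have [m [Mm Jm]] := exists_max IJ nJ1.
  have mG : G m := conj Mm (Jm r Jr).
  have mG' : m \in fset_set G by rewrite in_fset_set //; apply: mem_set.
  have [D [nD YD]] := (Hys' m Mm).2 Y HY
     (fun y yy => Ys y (sG m y mG' yy)) x Nx.
  exact: nD (Jm D YD).
by move: J1; rewrite /J /= tofrac1 scale1r.
Qed.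

End Main.

Theorem mainTheorem15 (R : idomainType) (L : algType R)
  (V : lmodType {fraction R}) (act : V -> L -> V)
  (M : set V) (X : set R -> set V) :
  h_local R ->
  is_right_action act ->
  is_Lsubmod act M -> fg_Lmod act M ->
  tensorQ M = [set: V] ->
  (forall m, maximal_ideal m ->
     [/\ is_loc_Lsubmod act m (X m), X m `<=` localize m M &
         tensorQ (X m) = tensorQ (localize m M)]) ->
  ((exists N : set V, [/\ is_Lsubmod act N, N `<=` M &
        forall m, maximal_ideal m -> localize m N = X m]) <->
   finite_set [set m : set R | maximal_ideal m /\ X m <> localize m M])
  /\
  ((forall m, maximal_ideal m -> fg_loc_Lmod act m (X m)) ->
   forall N : set V, is_Lsubmod act N -> N `<=` M ->
     (forall m, maximal_ideal m -> localize m N = X m) ->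
     fg_Lmod act N).
Proof.
move=> hl HA HMs [n [g [Mg HMgen]]] HMT HX; split.
  split; [exact: (partA hl HA HMT HX HMgen)|exact: (partB hl HA HMs HMT HX HMgen)].
move=> Hfg N HN NM HNX; exact: (partC hl HA HMT HX Mg HMgen Hfg HN NM HNX).
Qed.
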